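(* Let $\mathfrak L$ be a left-resolving $\lambda$-graph system presenting a subshift $\Lambda$, with vertex sets $V_l=\{v_1^l,\dots,v_{m(l)}^l\}$. Consider: (i) $\mathfrak L$ satisfies condition (I); (ii) for every $l\in\mathbb Z_{\ge0}$, $v\in V_l$, $(x_n)_{n\in\mathbb N}\in\Gamma^+_\infty(v)$ and $m\in\mathbb N$ there is $(y_n)_{n\in\mathbb N}\in\Gamma^+_\infty(v)$ with $x_j=y_j$ for $j=1,\dots,m$ and $x_N\neq y_N$ for some $N>m$; (iii) for all $k,l\in\mathbb N$ with $k\le l$ there exist $y(i)\in\Gamma^+_\infty(v_i^l)$, $i=1,\dots,m(l)$, such that $\sigma_\Lambda^n(y(i))\neq y(j)$ for all $i,j=1,\dots,m(l)$ and $n=1,\dots,k$. Then (i) $\Leftrightarrow$ (ii) $\Rightarrow$ (iii). If moreover $\mathfrak L$ is the minimal presentation $\mathfrak L_\Lambda^{\min}$ of a normal subshift $\Lambda$, then (i), (ii), (iii) are all equivalent.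
   Context: A $\lambda$-graph system over a finite alphabet $\Sigma$ is $\mathfrak L=(V,E,\lambda,\iota)$ where $V=\bigsqcup_{l\ge0}V_l$ with $V_l$ finite, $E=\bigsqcup_{l\ge0}E_{l,l+1}$ with each $e\in E_{l,l+1}$ having source $s(e)\in V_l$ and terminal $t(e)\in V_{l+1}$, $\lambda:E\to\Sigma$ a labeling, $\iota:V_{l+1}\to V_l$ surjections, every vertex has an outgoing edge and every vertex of $V_{l+1}$ an incoming edge, and (local property) for $u\in V_{l-1}$, $v\in V_{l+1}$ there is a label-preserving bijection between $\{e\in E_{l,l+1}:t(e)=v,\ \iota(s(e))=u\}$ and $\{e\in E_{l-1,l}:s(e)=u,\ t(e)=\iota(v)\}$. It is left-resolving if $t(e)=t(f)$, $\lambda(e)=\lambda(f)$ imply $e=f$. The presented subshift $\Lambda$ has as admissible words the labels of finite paths; $X_\Lambda$ is its right one-sided subshift with shift $\sigma_\Lambda$. For $v\in V_l$, $\Gamma^+_\infty(v)=\{(\lambda(e_1),\lambda(e_2),\dots):s(e_1)=v,\ e_i\in E_{l+i-1,l+i},\ t(e_i)=s(e_{i+1})\}\subset X_\Lambda$. $\mathfrak L$ satisfies condition (I) if $\Gamma^+_\infty(v)$ contains at least two distinct sequences for every vertex $v$. For subshifts: $\Gamma_l^-(\mu)=\{\nu\in B_l(\Lambda):\nu\mu\in B_*(\Lambda)\}$, $\Gamma_*^+(\mu)=\{\nu:\mu\nu\in B_*(\Lambda)\}$; $\mu$ is $l$-synchronizing if $\Gamma_l^-(\mu)=\Gamma_l^-(\mu\omega)$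 for all $\omega\in\Gamma_*^+(\mu)$, $S_l(\Lambda)$ the set of these; $\mu\sim_l\nu$ iff $\Gamma_l^-(\mu)=\Gamma_l^-(\nu)$. $\Lambda$ is normal if irreducible, infinite, and for every $\eta\in B_l(\Lambda)$ and $k>l$ there is $\nu\in S_k(\Lambda)$ with $\eta\nu\in S_{k-l}(\Lambda)$. The minimal presentation $\mathfrak L_\Lambda^{\min}$ has $V_0$ a singleton, $V_l=S_l(\Lambda)/\!\sim_l$, an edge labeled $\alpha$ from $[\alpha\nu]_l$ to $[\nu]_{l+1}$ for $\nu\in S_{l+1}(\Lambda)$ with $\alpha\nu\in B_*(\Lambda)$, and $\iota([\nu]_{l+1})=[\nu]_l$. *)

(* Defs.v *)
From HB Require Import structures.
From mathcomp Require Import all_boot all_order all_algebra.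
Set Implicit Arguments. Unset Strict Implicit. Unset Printing Implicit Defensive.

(* V l = V_l, E l = E_{l,l+1}; src : E l -> V l, trg : E l -> V (l+1) *)
Unset Implicit Arguments.
Record lgraph_system (S : finType) := LGraphSystem {
  V : nat -> finType;
  E : nat -> finType;
  src : forall l, E l -> V l;
  trg : forall l, E l -> V l.+1;
  lab : forall l, E l -> S;
  iota : forall l, V l.+1 -> V l;
  iota_surj : forall l (u : V l), exists v : V l.+1, iota l v = u;
  has_out : forall l (v : V l), exists e : E l, src l e = v;
  has_in : forall l (v : V l.+1), exists e : E l, trg l e = v;
  (* local property, for u in V_{l-1}, v in V_{l+1}, written with l := l+1 *)
  local_prop : forall l (u : V l) (v : V l.+2),
    exists f : {e : E l.+1 | (trg l.+1 e == v) && (iota l (src l.+1 e) == u)} ->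
               {e : E l | (src l e == u) && (trg l e == iota l.+1 v)},
      bijective f /\ forall e, lab l (proj1_sig (f e)) = lab l.+1 (proj1_sig e)
}.

Set Implicit Arguments.
Arguments V {S} L l : rename.
Arguments E {S} L l : rename.
Arguments src {S L l} e : rename.
Arguments trg {S L l} e : rename.
Arguments lab {S L l} e : rename.
Arguments iota {S L l} v : rename.

Definition left_resolving (S : finType) (L : lgraph_system S) : Prop :=
  forall l (e f : E L l), trg e = trg f -> lab e = lab f -> e = f.

(* One-sided sequences (x_1, x_2, ...) are functions nat -> S, with
   x_n stored at index n-1. *)
Definition shift1 (S : Type) (x : nat -> S) : nat -> S := fun n => x n.+1.

(* Gamma^+_infty(v): labels of infinite paths e_1 e_2 ... with s(e_1) = v,
   e_i in E_{l+i-1,l+i} (here: e i : E (i + l)). *)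
Definition Gamma_inf (S : finType) (L : lgraph_system S) (l : nat) (v : V L l)
    (x : nat -> S) : Prop :=
  exists e : forall i, E L (i + l),
    [/\ src (e 0) = v,
        forall i, trg (e i) = src (e i.+1)
      & forall i, x i = lab (e i)].

Definition condI (S : finType) (L : lgraph_system S) : Prop :=
  forall l (v : V L l), exists x y, [/\ Gamma_inf v x, Gamma_inf v y & x <> y].

Definition zseq (S : Type) := int -> S.

Definition shiftZ (S : Type) (x : zseq S) : zseq S := fun i => x (i + 1)%R.

Definition block (S : Type) (x : zseq S) (i : int) (n : nat) : seq S :=
  mkseq (fun k => x (i + k%:Z)%R) n.

Definition inB (S : Type) (X : zseq S -> Prop) (w : seq S) : Prop :=
  exists x i, X x /\ block x i (size w) = w.

Definition is_subshift (S : Type) (X : zseq S -> Prop) : Prop :=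
  [/\ forall x, X x -> X (shiftZ x),
      forall x, X x -> exists y, X y /\ shiftZ y = x
    & forall x, (forall i n, inB X (block x i n)) -> X x].

Definition sim_l (S : Type) (X : zseq S -> Prop) (l : nat) (mu mu' : seq S) : Prop :=
  forall nu, size nu = l -> (inB X (nu ++ mu) <-> inB X (nu ++ mu')).

Definition lsync (S : Type) (X : zseq S -> Prop) (l : nat) (mu : seq S) : Prop :=
  inB X mu /\ forall om, inB X (mu ++ om) -> sim_l X l mu (mu ++ om).

Definition irreducible (S : Type) (X : zseq S -> Prop) : Prop :=
  forall u w, inB X u -> inB X w -> exists v, inB X (u ++ v ++ w).

Definition infinite_set (T : Type) (X : T -> Prop) : Prop :=
  ~ exists (n : nat) (f : 'I_n -> T), forall x, X x -> exists i, x = f i.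

Definition normal (S : Type) (X : zseq S -> Prop) : Prop :=
  [/\ irreducible X, infinite_set X &
      forall (l : nat) (eta : seq S), size eta = l -> inB X eta ->
        forall k, l < k -> exists nu, lsync X k nu /\ lsync X (k - l) (eta ++ nu)].

(* L is (isomorphic to) the minimal presentation L_Lambda^min:
   c l maps words of S_l(Lambda) onto V_l, inducing V_l = S_l/~_l;
   iota([nu]_{l+1}) = [nu]_l; edges are exactly the edges labeled alpha from
   [alpha nu]_l to [nu]_{l+1} (nu in S_{l+1}, alpha nu in B_star), one for each
   such (source, label, target). *)
Definition is_min_presentation (S : finType) (X : zseq S -> Prop)
    (L : lgraph_system S) : Prop :=
  exists c : forall l, seq S -> V L l,
  [/\ (forall l mu nu, lsync X l mu -> lsync X l nu ->
        (c l mu = c l nu <-> sim_l X l mu nu)) /\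
      (forall l (v : V L l), exists mu, lsync X l mu /\ c l mu = v),
      forall l nu, lsync X l.+1 nu -> iota (c l.+1 nu) = c l nu,
      forall l (e : E L l), exists alpha nu,
        [/\ lsync X l.+1 nu, inB X (alpha :: nu), lab e = alpha,
            src e = c l (alpha :: nu) & trg e = c l.+1 nu],
      forall l alpha nu, lsync X l.+1 nu -> inB X (alpha :: nu) ->
        exists e : E L l,
        [/\ lab e = alpha, src e = c l (alpha :: nu) & trg e = c l.+1 nu]
    & forall l (e f : E L l), src e = src f -> trg e = trg f -> lab e = lab f ->
        e = f].

(* Main.v *)
Require Import Defs.
From HB Require Import structures.
From mathcomp Require Import all_boot all_order all_algebra zify ring.
From Stdlib Require Import FunctionalExtensionality IndefiniteDescription Classical.
From Stdlib Require List.
Set Implicit Arguments. Unset Strict Implicit. Unset Printing Implicit Defensive.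

Lemma blockD (S : Type) (x : zseq S) i m n :
  block x i (m + n) = block x i m ++ block x (i + m%:Z)%R n.
Proof.
rewrite /block /mkseq iotaD map_cat add0n; congr (_ ++ _).
rewrite -[m in iota m](addn0 m) iotaDl -map_comp; apply: eq_map => k /=.
by rewrite PoszD GRing.addrA.
Qed.

Lemma size_block (S : Type) (x : zseq S) i n : size (block x i n) = n.
Proof. exact: size_mkseq. Qed.

Lemma inB_catl (S : eqType) (X : zseq S -> Prop) a b : inB X (a ++ b) -> inB X a.
Proof.
move=> [x [i [Xx Hb]]]; exists x, i; split => //.
move: Hb; rewrite size_cat blockD => /eqP; rewrite eqseq_cat ?size_block //.
by case/andP => /eqP ->.
Qed.

Lemma inB_catr (S : eqType) (X : zseq S -> Prop) a b : inB X (a ++ b) -> inB X b.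
Proof.
move=> [x [i [Xx Hb]]]; exists x, (i + (size a)%:Z)%R; split => //.
move: Hb; rewrite size_cat blockD => /eqP; rewrite eqseq_cat ?size_block //.
by case/andP => _ /eqP ->.
Qed.

Lemma inB_mid (S : eqType) (X : zseq S -> Prop) a b c : inB X (a ++ b ++ c) -> inB X b.
Proof. by move/inB_catr/inB_catl. Qed.

Lemma inB_rext (S : eqType) (X : zseq S -> Prop) w n :
  inB X w -> exists om, size om = n /\ inB X (w ++ om).
Proof.
move=> [x [i [Xx Hb]]]; exists (block x (i + (size w)%:Z)%R n); split.
  exact: size_block.
exists x, i; split => //; by rewrite size_cat size_block blockD Hb.
Qed.

Lemma inB_lext (S : eqType) (X : zseq S -> Prop) w n :
  inB X w -> exists g, size g = n /\ inB X (g ++ w).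
Proof.
move=> [x [i [Xx Hb]]]; exists (block x (i - n%:Z)%R n); split.
  exact: size_block.
exists x, (i - n%:Z)%R; split => //.
by rewrite size_cat size_block blockD GRing.subrK Hb.
Qed.

Lemma sim_sym (S : eqType) (X : zseq S -> Prop) l a b : sim_l X l a b -> sim_l X l b a.
Proof. by move=> H nu Hn; rewrite (H nu Hn). Qed.

Lemma sim_trans (S : eqType) (X : zseq S -> Prop) l a b c :
  sim_l X l a b -> sim_l X l b c -> sim_l X l a c.
Proof. by move=> H1 H2 nu Hn; rewrite (H1 nu Hn) (H2 nu Hn). Qed.

Lemma lsync_rext (S : eqType) (X : zseq S -> Prop) m mu om :
  lsync X m mu -> inB X (mu ++ om) -> lsync X m (mu ++ om).
Proof.
move=> [Hmu Hs] Hb; split => // om' Hb'.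
have H1 := Hs om Hb.
have H2 := Hs (om ++ om'); rewrite catA in H2; have {}H2 := H2 Hb'.
exact: sim_trans (sim_sym H1) H2.
Qed.

Lemma lsync_pre (S : eqType) (X : zseq S -> Prop) m m' b nu :
  lsync X m nu -> inB X (b ++ nu) -> m' + size b <= m -> lsync X m' (b ++ nu).
Proof.
move=> [Hnu Hs] Hb Hle; split => // om Hom a Ha; split; last first.
  by rewrite !catA => /inB_catl; rewrite -!catA.
move=> Habn.
have [g [Hg Hgb]] := inB_lext (m - (m' + size b)) Habn.
have Hnuom : inB X (nu ++ om) by move: Hom; rewrite -catA => /inB_catr.
have := Hs om Hnuom (g ++ a ++ b).
rewrite !size_cat Hg Ha subnK // => /(_ erefl) [H1 _].
have Hgb' : inB X ((g ++ a ++ b) ++ nu) by move: Hgb; rewrite !catA.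
move: (H1 Hgb').
by rewrite -!catA => /inB_catr.
Qed.

Definition castV (S : finType) (L : lgraph_system S) a b (h : a = b) (v : V L a) : V L b :=
  eq_rect a (V L) v b h.
Definition castE (S : finType) (L : lgraph_system S) a b (h : a = b) (e : E L a) : E L b :=
  eq_rect a (E L) e b h.

Lemma castV_K (S : finType) (L : lgraph_system S) a (h : a = a) (v : V L a) : castV h v = v.
Proof. by rewrite (eq_irrelevance h erefl). Qed.

Lemma castV_irr (S : finType) (L : lgraph_system S) a b (h h' : a = b) (v : V L a) :
  castV h v = castV h' v.
Proof. by rewrite (eq_irrelevance h h'). Qed.

Lemma src_castE (S : finType) (L : lgraph_system S) a b (h : a = b) (e : E L a) :
  src (castE h e) = castV h (src e).
Proof. by case: b / h. Qed.

Lemma trg_castE (S : finType) (L : lgraph_system S) a b (h : a = b) (e : E L a) :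
  trg (castE h e) = castV (congr1 succn h) (trg e).
Proof. by case: b / h. Qed.

Lemma lab_castE (S : finType) (L : lgraph_system S) a b (h : a = b) (e : E L a) :
  lab (castE h e) = lab e.
Proof. by case: b / h. Qed.

Definition scons (S : Type) (a : S) (x : nat -> S) : nat -> S :=
  fun i => if i is j.+1 then x j else a.

Lemma Gamma_cons (S : finType) (L : lgraph_system S) l (v : V L l) (e0 : E L l) x :
  src e0 = v -> Gamma_inf (trg e0) x -> Gamma_inf v (scons (lab e0) x).
Proof.
move=> He0 [g [Hg0 Hg Hgl]].
have h : forall j, j + l.+1 = j.+1 + l by move=> j; rewrite addnS.
pose f := fun i => match i return E L (i + l) with
                   | 0 => e0 | j.+1 => castE (h j) (g j) end.
exists f; split => //.
  intros [|j]; rewrite /f.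
    by rewrite src_castE Hg0 castV_K.
  rewrite trg_castE src_castE -Hg; exact: castV_irr.
by case=> [|j] //=; rewrite lab_castE.
Qed.

Lemma Gamma_uncons (S : finType) (L : lgraph_system S) l (v : V L l) x :
  Gamma_inf v x -> exists e0 : E L l,
    [/\ src e0 = v, lab e0 = x 0 & Gamma_inf (trg e0) (shift1 x)].
Proof.
move=> [e [He0 He Hel]].
have h : forall j, j.+1 + l = j + l.+1 by move=> j; rewrite addnS.
exists (e 0); split => //.
exists (fun j => castE (h j) (e j.+1)); split.
- by rewrite src_castE -He castV_K.
- move=> j; rewrite trg_castE src_castE -He; exact: castV_irr.
- by move=> j; rewrite lab_castE /shift1 Hel.
Qed.

Lemma Gamma_nonempty (S : finType) (L : lgraph_system S) l (v : V L l) :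
  exists x, Gamma_inf v x.
Proof.
pose out := fun l (u : V L l) => proj1_sig (constructive_indefinite_description _ (@has_out _ L l u)).
have Hout : forall l (u : V L l), src (out l u) = u.
  by move=> l' u; rewrite /out; case: constructive_indefinite_description.
pose fix p (i : nat) : E L (i + l) :=
  match i return E L (i + l) with 0 => out l v | j.+1 => out _ (trg (p j)) end.
exists (fun i => lab (p i)), p; split => //.
- by rewrite /= Hout.
- by move=> i /=; rewrite Hout.
Qed.

Lemma I_II (S : finType) (L : lgraph_system S) : condI L ->
  forall m l (v : V L l) x, Gamma_inf v x ->
    exists y, [/\ Gamma_inf v y, forall j, j < m -> x j = y j & y <> x].
Proof.
move=> HI; elim=> [|m IH] l v x Hx.
  have [y1 [y2 [H1 H2 H12]]] := HI l v.
  case: (classic (y1 = x)) => [E1|N1].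
    exists y2; split => //; congruence.
  by exists y1; split.
have [e0 [He0 Hl Hg]] := Gamma_uncons Hx.
have [y' [Hy' Hagr Hne]] := IH _ _ _ Hg.
exists (scons (lab e0) y'); split.
- exact: Gamma_cons.
- by case=> [|j] //= Hj; rewrite -Hagr.
- move=> Heq; apply: Hne; apply: functional_extensionality => j.
  by rewrite -Heq.
Qed.

Definition cII_def (S : finType) (L : lgraph_system S) :=
    forall l (v : V L l) (x : nat -> S), Gamma_inf v x ->
    forall m, 0 < m ->
    exists y, [/\ Gamma_inf v y,
                  (forall j, j < m -> x j = y j)
                & exists N, m <= N /\ x N <> y N].

Lemma iter_shift (S : Type) n (y : nat -> S) j : iter n (@shift1 S) y j = y (n + j).
Proof. by elim: n j => [|n IH] j //=; rewrite /shift1 IH addnS. Qed.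

Lemma bound_diff (S : Type) (x : nat -> S) (F : list (nat -> S)) M :
  exists M', [/\ M <= M', 0 < M' & forall f, List.In f F -> f <> x ->
     exists d, d < M' /\ f d <> x d].
Proof.
elim: F => [|g F [M' [H1 H2 H3]]].
  by exists M.+1; split => //; lia.
case: (classic (g = x)) => [Eg|Ng].
  exists M'; split => // f [<-|Hf] //; exact: H3.
have [d Hd] : exists d, g d <> x d.
  apply: NNPP => Hn; apply: Ng; apply: functional_extensionality => d.
  by apply: NNPP => Hd; apply: Hn; exists d.
exists (maxn M' d.+1); split; first by lia.
  by lia.
move=> f [<-|Hf] Hfx.
  by exists d; split => //; lia.
have [d' [Hd' Hne]] := H3 f Hf Hfx; exists d'; split => //; lia.
Qed.

Lemma avoid (S : finType) (L : lgraph_system S) : cII_def L ->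
  forall l (v : V L l) x, Gamma_inf v x -> forall M (F : list (nat -> S)),
  exists y, [/\ Gamma_inf v y, forall j, j < M -> x j = y j &
                forall f, List.In f F -> y <> f].
Proof.
move=> HII l v x Hx M F.
have [M' [HM HM0 HF]] := bound_diff x F M.
case: (classic (List.In x F)) => Hin; last first.
  by exists x; split => // f Hf Hxf; apply: Hin; rewrite Hxf.
have [y [Hy Hag [N [HN HxN]]]] := HII l v x Hx M' HM0.
exists y; split => //.
  by move=> j Hj; apply: Hag; lia.
move=> f Hf Hyf; subst f.
case: (classic (y = x)) => [Eyx|Nyx].
  by apply: HxN; rewrite Eyx.
have [d [Hd Hne]] := HF y Hf Nyx.
by apply: Hne; rewrite Hag.
Qed.

Lemma mem_In (T : eqType) (x : T) s : x \in s -> List.In x s.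
Proof.
elim: s => [|a s IH] //; rewrite inE => /orP [/eqP ->|H]; [by left | by right; apply: IH].
Qed.

Lemma periodic_mod (S : Type) (z : nat -> S) n :
  (forall j, z (n + j) = z j) -> forall j, z j = z (j %% n).
Proof.
move=> Hp j; rewrite {1}(divn_eq j n).
elim: (j %/ n) => [|q IH]; first by rewrite mul0n add0n.
by rewrite mulSn -addnA Hp.
Qed.

Lemma II_III (S : finType) (L : lgraph_system S) : cII_def L ->
  forall k l (s : seq (V L l)), exists y : V L l -> (nat -> S),
    (forall v, Gamma_inf v (y v)) /\
    forall v w, v \in s -> w \in s -> forall n, 0 < n -> n <= k ->
       iter n (@shift1 S) (y v) <> y w.
Proof.
move=> HII k l; elim=> [|v0 s IH].
  exists (fun v => proj1_sig (constructive_indefinite_description _ (Gamma_nonempty v))).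
  by split => // v; case: constructive_indefinite_description.
have [y' [Hy' Hs]] := IH.
pose x0 := y' v0.
pose pn := fun n j => x0 (j %% n).
pose cn := fun n w j => if j < n then x0 j else y' w (j - n).
pose F := List.flat_map (fun n => pn n :: List.flat_map
            (fun w => [:: cn n w; iter n (@shift1 S) (y' w)]) s) (List.seq 1 k).
have HinF : forall n, 0 < n -> n <= k ->
   List.In (pn n) F /\ forall w, w \in s ->
   List.In (cn n w) F /\ List.In (iter n (@shift1 S) (y' w)) F.
  move=> n Hn Hnk; split.
    apply List.in_flat_map; exists n; split; last by left.
    apply List.in_seq; lia.
  move=> w Hw; split; apply List.in_flat_map; exists n;
    (split; first by apply List.in_seq; lia); right;
    apply List.in_flat_map; exists w; (split; first exact: mem_In).
  - by left.
  - by right; left.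
have [z [Hz Hag HnF]] := avoid HII (Hy' v0) k F.
exists (fun v => if v == v0 then z else y' v); split.
  by move=> v; case: (eqVneq v v0) => [->|_].
move=> v w; rewrite !inE => Hv Hw n Hn Hnk.
have [Hp Hc] := HinF n Hn Hnk.
case: (eqVneq v v0) => [Ev|Nv]; case: (eqVneq w v0) => [Ew|Nw];
  rewrite ?Ev ?Ew ?eqxx ?(negbTE Nv) ?(negbTE Nw).
- move=> Heq; apply: (HnF (pn n) Hp); apply: functional_extensionality => j.
  have Hper : forall j, z (n + j) = z j by move=> i; rewrite -iter_shift Heq.
  rewrite (periodic_mod Hper) /pn /x0 Hag //.
  by apply: leq_trans (ltn_pmod j Hn) Hnk.
- have Hws : w \in s by move: Hw; rewrite (negbTE Nw).
  move=> Heq; apply: (HnF (cn n w) (Hc w Hws).1); apply: functional_extensionality => j.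
  rewrite /cn /x0; case: ifP => Hj.
    by rewrite Hag //; lia.
  by rewrite -Heq iter_shift subnKC //; lia.
- have Hvs : v \in s by move: Hv; rewrite (negbTE Nv).
  move=> Heq; apply: (HnF _ (Hc v Hvs).2); by rewrite Heq.
- have Hvs : v \in s by move: Hv; rewrite (negbTE Nv).
  have Hws : w \in s by move: Hw; rewrite (negbTE Nw).
  exact: Hs.
Qed.

Lemma drop_catle (T : Type) i (s1 s2 : seq T) :
  i <= size s1 -> drop i (s1 ++ s2) = drop i s1 ++ s2.
Proof.
rewrite drop_cat; case: ltnP => // H1 H2.
have -> : i = size s1 by apply/eqP; rewrite eqn_leq H1 H2.
by rewrite subnn drop0 drop_size.
Qed.

Lemma ext_F (S : eqType) (X : zseq S -> Prop) l u : normal X -> inB X u ->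
  exists nu, [/\ 0 < size nu, lsync X (l + size u + 1) nu & inB X (u ++ nu)].
Proof.
move=> [_ _ Hn] Hu.
have [nu [H1 H2]] := Hn (size u) u erefl Hu (l + size u + 1) ltac:(lia).
have Hunu : inB X (u ++ nu) by case: H2.
have [om [Hom Hb]] := inB_rext 1 Hunu.
exists (nu ++ om); split.
- by rewrite size_cat Hom; lia.
- apply: lsync_rext => //; move: Hb; rewrite -catA; exact: inB_catr.
- by rewrite catA.
Qed.

Lemma construct (S : finType) (L : lgraph_system S) (X : zseq S -> Prop)
  (c : forall l, seq S -> V L l) :
  normal X ->
  (forall l mu nu, lsync X l mu -> lsync X l nu -> (c l mu = c l nu <-> sim_l X l mu nu)) ->
  (forall l alpha nu, lsync X l.+1 nu -> inB X (alpha :: nu) ->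
        exists e : E L l,
        [/\ lab e = alpha, src e = c l (alpha :: nu) & trg e = c l.+1 nu]) ->
  forall (a0 : S) l mu om, lsync X l mu -> inB X (mu ++ om) ->
  exists x, Gamma_inf (c l mu) x /\
     forall j, j < size (mu ++ om) -> x j = nth a0 (mu ++ om) j.
Proof.
move=> Hnorm Hc Hedge a0 l mu om Hmu Hmuom.
set u0 := mu ++ om.
have exF : forall u, exists nu, inB X u ->
   [/\ 0 < size nu, lsync X (l + size u + 1) nu & inB X (u ++ nu)].
  move=> u; case: (classic (inB X u)) => Hu.
    by have [nu Hnu] := ext_F l Hnorm Hu; exists nu.
  by exists [::].
pose F u := proj1_sig (constructive_indefinite_description _ (exF u)).
have HF : forall u, inB X u ->
   [/\ 0 < size (F u), lsync X (l + size u + 1) (F u) & inB X (u ++ F u)].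
  by move=> u; rewrite /F; case: constructive_indefinite_description.
pose fix U j := match j with 0 => u0 | j'.+1 => U j' ++ F (U j') end.
have HUS : forall j, U j.+1 = U j ++ F (U j) by [].
have HU : forall j, inB X (U j).
  by elim=> [|j IH] //; rewrite HUS; case: (HF _ IH).
have HFU : forall j, [/\ 0 < size (F (U j)), lsync X (l + size (U j) + 1) (F (U j))
                       & inB X (U j ++ F (U j))] by move=> j; exact: HF.
have Hsz : forall j, size u0 + j <= size (U j).
  elim=> [|j IH]; first by rewrite addn0.
  rewrite HUS size_cat; case: (HFU j) => H _ _; lia.
have Hpre : forall j, exists t, U j = u0 ++ t.
  elim=> [|j [t Ht]]; first by exists [::]; rewrite cats0.
  by exists (t ++ F (U j)); rewrite HUS Ht catA.
pose x i := nth a0 (U i.+1) i.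
pose w i := drop i (U i.+1).
have K1 : forall i, lsync X (i + l) (w i).
  move=> i; have Hi : i <= size (U i) by have := Hsz i; lia.
  rewrite /w HUS drop_catle //.
  case: (HFU i) => _ Hs HB.
  apply: (lsync_pre Hs).
    by move: HB; rewrite -{1}(cat_take_drop i (U i)) -catA; exact: inB_catr.
  by rewrite size_drop addnAC subnKC // addnC leq_addr.
have K2 : forall i, drop i (U i.+2) = x i :: w i.+1.
  move=> i; have Hi : i < size (U i.+1) by have := Hsz i.+1; lia.
  rewrite (drop_nth a0); last by rewrite HUS size_cat; lia.
  by rewrite /x /w HUS nth_cat Hi.
have K3 : forall i, drop i (U i.+2) = w i ++ F (U i.+1).
  move=> i; have Hi : i <= size (U i.+1) by have := Hsz i.+1; lia.
  by rewrite HUS drop_catle.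
have K4 : forall i, inB X (drop i (U i.+2)).
  by move=> i; move: (HU i.+2); rewrite -{1}(cat_take_drop i (U i.+2)); exact: inB_catr.
have Hcw : forall i, c (i + l) (x i :: w i.+1) = c (i + l) (w i).
  move=> i; apply/sym_eq; apply/Hc.
  - exact: K1.
  - rewrite -K2 K3; apply: lsync_rext; first exact: K1.
    by rewrite -K3.
  - by case: (K1 i) => _ H; rewrite -K2 K3; apply: H; rewrite -K3.
have exE : forall i, exists e : E L (i + l),
   [/\ lab e = x i, src e = c (i + l) (x i :: w i.+1) & trg e = c (i + l).+1 (w i.+1)].
  move=> i; apply: Hedge; first exact: (K1 i.+1).
  by rewrite -K2.
pose e i := proj1_sig (constructive_indefinite_description _ (exE i)).
have He : forall i, [/\ lab (e i) = x i, src (e i) = c (i + l) (x i :: w i.+1)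
                      & trg (e i) = c (i + l).+1 (w i.+1)].
  by move=> i; rewrite /e; case: constructive_indefinite_description.
exists x; split.
  exists e; split.
  - case: (He 0) => _ -> _.
    have -> : c (0 + l) (x 0 :: w 1) = c l (w 0) := Hcw 0.
    apply/Hc; first exact: (K1 0).
      done.
    apply: sim_sym.
    have -> : w 0 = mu ++ (om ++ F u0) by rewrite /w drop0 HUS /= catA.
    case: Hmu => _ H; apply: H; rewrite catA -/u0; exact: (HU 1).
  - move=> i; case: (He i) => _ _ ->; case: (He i.+1) => _ -> _.
    by rewrite (Hcw i.+1).
  - by move=> i; case: (He i).
move=> j Hj; rewrite /x; have [t ->] := Hpre j.+1.
by rewrite nth_cat -/u0 Hj.
Qed.
Import GRing.Theory Num.Theory.

Lemma zper_int (S : Type) (y : int -> S) (Q : int) :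
  (forall i, y (i + Q)%R = y i) -> forall k i, y (i + k * Q)%R = y i.
Proof.
move=> Hp.
have Hpos : forall n i, y (i + n%:Z * Q)%R = y i.
  elim=> [|n IH] i; first by rewrite mul0r addr0.
  by rewrite -[n.+1]addn1 PoszD mulrDl mul1r addrA Hp IH.
case=> [n|n] i; first exact: Hpos.
rewrite NegzE.
have := Hpos n.+1 (i + - n.+1%:Z * Q)%R.
by rewrite mulNr addrNK => ->.
Qed.

Lemma unique_ext_finite (S : finType) (X : zseq S -> Prop) mu :
  irreducible X -> inB X mu ->
  (forall om om', size om = size om' -> inB X (mu ++ om) -> inB X (mu ++ om') -> om = om') ->
  exists n (f : 'I_n -> zseq S), forall x, X x -> exists i, x = f i.
Proof.
move=> Hirr Hmu Hun.
have [om1 [Hs1 Hb1]] := inB_rext 1 Hmu.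
have [a Ha] : exists a, om1 = [:: a].
  by case: om1 Hs1 {Hb1} => [|a [|b t]] //= _; exists a.
pose ext n := proj1_sig (constructive_indefinite_description _ (inB_rext n Hmu)).
have Hext : forall n, size (ext n) = n /\ inB X (mu ++ ext n).
  by move=> n; rewrite /ext; case: constructive_indefinite_description.
pose z j := nth a (ext j.+1) j.
have zP : forall om j, inB X (mu ++ om) -> j < size om -> nth a om j = z j.
  move=> om j Hb Hj.
  have Ht : inB X (mu ++ take j.+1 om).
    by move: Hb; rewrite -{1}(cat_take_drop j.+1 om) catA; exact: inB_catl.
  have [He1 He2] := Hext j.+1.
  have E := Hun (take j.+1 om) (ext j.+1) ltac:(rewrite size_takel // He1) Ht He2.
  by rewrite /z -E nth_take.
have [v Hv] := Hirr _ _ Hb1 Hb1.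
pose Q := (size v + size mu).+1.
have HQ : size (om1 ++ v ++ mu) = Q by rewrite Ha /= size_cat.
have zper : forall j, z (Q + j) = z j.
  move=> j; have [om [Hom Hb]] := inB_rext j Hv.
  have E1 : z (Q + j) = nth a (om1 ++ om) j.
    rewrite -(zP (om1 ++ v ++ mu ++ om1 ++ om)).
    - by rewrite (catA v) (catA om1) nth_cat HQ ltnNge leq_addr /= addKn.
    - by move: Hb; rewrite -!catA.
    - by rewrite (catA v) (catA om1) size_cat HQ size_cat Ha Hom /=; lia.
  have E2 : z j = nth a (om1 ++ om) j.
    rewrite -(zP (om1 ++ om)) //.
      by move: Hb; rewrite -!catA (catA mu) (catA (mu ++ om1)); exact: inB_catr.
    by rewrite size_cat Ha Hom.
  by rewrite E1 E2.
have yper : forall y, X y -> forall i, y (i + Q%:Z)%R = y i.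
  move=> y Xy i.
  pose W := block y i Q.+1.
  have HW : inB X W by exists y, i; rewrite size_block.
  have [v' Hv'] := Hirr _ _ Hmu HW.
  have Hy : forall t, t <= Q -> y (i + t%:Z)%R = z (size v' + t).
    move=> t Ht; rewrite -(zP (v' ++ W)) //; last by rewrite size_cat size_block; lia.
    by rewrite nth_cat ltnNge leq_addr /= addKn nth_mkseq.
  have := Hy 0 (leq0n _); rewrite addr0 => ->.
  by rewrite Hy // addn0 (addnC (size v')) zper.
pose T := {ffun 'I_Q -> S}.
pose per (g : T) : zseq S := fun k => g (inord (absz (k %% Q%:Z)%Z)).
exists #|T|, (fun r => per (enum_val r)) => y Xy.
exists (enum_rank ([ffun t : 'I_Q => y (Posz t)] : T)).
rewrite enum_rankK; apply: functional_extensionality => k.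
have Hge : (0 <= (k %% Q%:Z)%Z)%R by apply: modz_ge0.
have Hlt : ((k %% Q%:Z)%Z < Q%:Z)%R by apply: ltz_pmod.
rewrite /per ffunE inordK; last by lia.
rewrite gez0_abs //.
by rewrite {1}(divz_eq k Q%:Z) addrC zper_int // => i; apply: yper.
Qed.

Lemma normal_condI (S : finType) (L : lgraph_system S) (X : zseq S -> Prop) :
  normal X -> is_min_presentation X L -> condI L.
Proof.
move=> Hn [c [[Hc Hsurj] _ _ Hedge _]] l v.
have [mu [Hmu <-]] := Hsurj l v.
case: (classic (exists om om', [/\ size om = size om', inB X (mu ++ om),
                                  inB X (mu ++ om') & om <> om'])).
  move=> [om [om' [Hs H1 H2 Hne]]].
  have [a0 _] : exists a : S, true.
    case: om Hs Hne {H1} => [|a t] Hs Hne; last by exists a.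
    by case: om' Hs Hne {H2}.
  have [x [Hx Hxa]] := construct Hn Hc Hedge a0 Hmu H1.
  have [y [Hy Hya]] := construct Hn Hc Hedge a0 Hmu H2.
  exists x, y; split => // Exy; apply: Hne.
  have E : mu ++ om = mu ++ om'.
    apply: (eq_from_nth (x0 := a0)); first by rewrite !size_cat Hs.
    move=> j Hj; rewrite -Hxa // Exy Hya //; by move: Hj; rewrite !size_cat Hs.
  by move: (congr1 (drop (size mu)) E); rewrite !drop_size_cat.
move=> Hno; exfalso.
case: Hn => Hirr Hinf _; apply: Hinf.
apply: (unique_ext_finite Hirr (proj1 Hmu)) => om om' Hs H1 H2.
apply: NNPP => Hne; apply: Hno; by exists om, om'; split.
Qed.

Theorem lemma2p13 (S : finType) (L : lgraph_system S) :
  left_resolving L ->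
  let cI := condI L in
  let cII :=
    forall l (v : V L l) (x : nat -> S), Gamma_inf v x ->
    forall m, 0 < m ->
    exists y, [/\ Gamma_inf v y,
                  (forall j, j < m -> x j = y j)
                & exists N, m <= N /\ x N <> y N] in
  let cIII :=
    forall k l, 0 < k -> k <= l ->
    exists y : V L l -> (nat -> S),
      (forall v, Gamma_inf v (y v)) /\
      forall (v w : V L l) (n : nat), 0 < n -> n <= k ->
        iter n (@shift1 S) (y v) <> y w in
  [/\ cI <-> cII, cII -> cIII &
      forall X : zseq S -> Prop, is_subshift X -> normal X ->
        is_min_presentation X L -> cIII -> cI].
Proof.
move=> _ cI cII cIII; split.
- split.
  + move=> HI l v x Hx m Hm.
    have [y [Hy Hag Hne]] := I_II HI m Hx.
    exists y; split => //.
    have [N HN] : exists N, x N <> y N.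
      apply: NNPP => H; apply: Hne; apply: functional_extensionality => j.
      by apply: NNPP => Hj; apply: H; exists j; move=> E; apply: Hj; rewrite E.
    exists N; split => //; rewrite leqNgt; apply/negP => HNm; exact: HN (Hag N HNm).
  + move=> HII l v.
    have [x Hx] := Gamma_nonempty v.
    have [y [Hy _ [N [_ HN]]]] := HII l v x Hx 1 erefl.
    by exists x, y; split => // E; apply: HN; rewrite E.
- move=> HII k l _ _.
  have [y [Hy Hs]] := II_III HII k (enum (V L l)).
  exists y; split => // v w n Hn Hnk; by apply: Hs; rewrite ?mem_enum.
- move=> X _ Hn Hm _; exact: normal_condI Hn Hm.
Qed.
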